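(* For every $\Gamma\subseteq\mathcal{L}_{\Box\!\!\rightarrow}$, we have $(\Gamma,\emptyset)\notin\mathsf{N4CK}$; i.e. every set of formulas of $\mathcal{L}_{\Box\!\!\rightarrow}$ is verified at some point of some Nelsonian conditional model.
   Context: Let $\mathcal{L}_{\Box\!\!\rightarrow}$ be the language built from propositional variables $p_0,p_1,\dots$ with binary $\wedge,\vee,\to$, unary strong negation $\sim$, and a binary would-conditional $\Box\!\!\rightarrow$. A Nelsonian conditional model is $\mathcal{M}=(W,\leq,R,V^+,V^-)$ where $W\neq\emptyset$, $\leq$ is a preorder on $W$, $V^+,V^-$ map each variable to a $\leq$-upward-closed subset of $W$, and $R\subseteq W\times(\mathcal{P}(W)\times\mathcal{P}(W))\times W$ (write $R_{(X,Y)}(w,v)$ for $(w,(X,Y),v)\in R$) satisfies for all $X,Y\subseteq W$: (c1) if $w\leq w'$ and $R_{(X,Y)}(w,v)$ then $R_{(X,Y)}(w',v')$ for some $v'\geq v$; (c2) if $R_{(X,Y)}(w,v)$ and $v\leq v'$ then $R_{(X,Y)}(w',v')$ for some $w'\geq w$. Verification $\models^+$ and falsification $\models^-$ are defined inductively: $w\models^\pm p$ iff $w\in V^\pm(p)$; $\wedge$: verified iff both conjuncts verified, falsified iff one is falsified; $\vee$: verified iff one disjunct verified, falsified iff both falsified; $w\models^+\sim\psi$ iff $w\models^-\psi$ and $w\models^-\sim\psi$ iff $w\models^+\psi$; $w\models^+\psi\to\chi$ iff for all $v\geq w$, $v\models^+\psi$ implies $v\models^+\chi$; $w\models^-\psi\to\chi$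 iff $w\models^+\psi$ and $w\models^-\chi$; $w\models^+\psi\Box\!\!\rightarrow\chi$ iff for all $v\geq w$ and all $u$ with $R_{\|\psi\|_\mathcal{M}}(v,u)$, $u\models^+\chi$; $w\models^-\psi\Box\!\!\rightarrow\chi$ iff some $u$ has $R_{\|\psi\|_\mathcal{M}}(w,u)$ and $u\models^-\chi$; here $\|\psi\|_\mathcal{M}=(\{w\mid w\models^+\psi\},\{w\mid w\models^-\psi\})$. $\mathsf{N4CK}$ is the set of pairs $(\Gamma,\Delta)$ of sets of formulas such that no pointed model verifies all members of $\Gamma$ while verifying no member of $\Delta$. *)

(* Defs.v *)
Inductive form : Type :=
  | Var  : nat -> form
  | And  : form -> form -> form
  | Or   : form -> form -> form
  | Imp  : form -> form -> form
  | SNeg : form -> form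
  | Cond : form -> form -> form.

Record model : Type := Model {
  W : Type;
  W_inhabited : inhabited W;
  le : W -> W -> Prop;
  le_refl : forall w, le w w;
  le_trans : forall u v w, le u v -> le v w -> le u w;
  R : (W -> Prop) * (W -> Prop) -> W -> W -> Prop;
  Vp : nat -> W -> Prop;
  Vn : nat -> W -> Prop;
  Vp_up : forall n w w', le w w' -> Vp n w -> Vp n w';
  Vn_up : forall n w w', le w w' -> Vn n w -> Vn n w';
  c1 : forall XY w w' v, le w w' -> R XY w v -> exists v', le v v' /\ R XY w' v';
  c2 : forall XY w v v', R XY w v -> le v v' -> exists w', le w w' /\ R XY w' v'
}.

(* eval M phi = (verification set, falsification set) = ||phi||_M *)
Fixpoint eval (M : model) (phi : form) : (W M -> Prop) * (W M -> Prop) :=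
  match phi with
  | Var n => (Vp M n, Vn M n)
  | And a b =>
      let (ap, an) := eval M a in let (bp, bn) := eval M b in
      (fun w => ap w /\ bp w, fun w => an w \/ bn w)
  | Or a b =>
      let (ap, an) := eval M a in let (bp, bn) := eval M b in
      (fun w => ap w \/ bp w, fun w => an w /\ bn w)
  | Imp a b =>
      let (ap, an) := eval M a in let (bp, bn) := eval M b in
      (fun w => forall v, le M w v -> ap v -> bp v, fun w => ap w /\ bn w)
  | SNeg a =>
      let (ap, an) := eval M a in (an, ap)
  | Cond a b =>
      let XY := eval M a in let (bp, bn) := eval M b in
      (fun w => forall v u, le M w v -> R M XY v u -> bp u,
       fun w => exists u, R M XY w u /\ bn u)
  end.

Definition verifies (M : model) (w : W M) (phi : form) : Prop := fst (eval M phi) w.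
Definition falsifies (M : model) (w : W M) (phi : form) : Prop := snd (eval M phi) w.

Definition N4CK (Gamma Delta : form -> Prop) : Prop :=
  forall (M : model) (w : W M),
    ~ ((forall phi, Gamma phi -> verifies M w phi) /\
       (forall psi, Delta psi -> ~ verifies M w psi)).

(* Main.v *)
Require Import Defs.

Definition M0 : model.
Proof.
  refine (Model unit (inhabits tt) (fun _ _ => True) _ _
            (fun _ _ _ => True) (fun _ _ => True) (fun _ _ => True) _ _ _ _);
  intros; try exact I; eauto.
Defined.

Lemma all_true : forall phi (w : W M0), fst (eval M0 phi) w /\ snd (eval M0 phi) w.
Proof.
  induction phi; intros w; simpl.
  - split; exact I.
  - destruct (eval M0 phi1) as [a b] eqn:E1; destruct (eval M0 phi2) as [c d] eqn:E2.
    simpl. destruct (IHphi1 w), (IHphi2 w). simpl in *. auto.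
  - destruct (eval M0 phi1) as [a b] eqn:E1; destruct (eval M0 phi2) as [c d] eqn:E2.
    simpl. destruct (IHphi1 w), (IHphi2 w). simpl in *. auto.
  - destruct (eval M0 phi1) as [a b] eqn:E1; destruct (eval M0 phi2) as [c d] eqn:E2.
    simpl. destruct (IHphi1 w), (IHphi2 w). simpl in *. split; auto.
    intros v _ _. exact (proj1 (IHphi2 v)).
  - destruct (eval M0 phi) as [a b] eqn:E1. simpl. destruct (IHphi w). simpl in *. auto.
  - destruct (eval M0 phi2) as [c d] eqn:E2. simpl. split.
    + intros v u _ _. exact (proj1 (IHphi2 u)).
    + exists w. split; [exact I| exact (proj2 (IHphi2 w))].
Qed.

Theorem proposition6 : forall Gamma : form -> Prop, ~ N4CK Gamma (fun _ => False).
Proof.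
  intros Gamma H. apply (H M0 tt). split.
  - intros phi _. exact (proj1 (all_true phi tt)).
  - intros psi F. destruct F.
Qed.
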